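(* Let $g$ be a positive integer; suppose that for some $l$ the set $S_l$ contains a consecutive prospective prime pair with gap $g$, and let $j>l+2$. Let $(a,a+g)$ be a consecutive prospective prime pair with gap $g$ in $S_j$. Then for every $0\le m\le P_{j+2}-1$, the number of integers $m_{j+1}\in\{0,\dots,P_{j+1}-1\}$ such that, with $M=m_{j+1}P_j\#+mP_{j+1}\#$, both $a+M$ and $a+g+M$ are coprime to $P_{j+2}\#$ (i.e. the number of pairs generated from $(a,a+g)$ that lie in the subset $S_{j+2}^{(m)}$) is at least $P_{j+1}-4$.
   Context: $P_k$ denotes the $k$-th prime ($P_1=2$), $P_k\#=\prod_{i=1}^kP_i$. $S_k=\{N\in\mathbb{N}:5\le N\le4+P_k\#\}$ and $S_k^{(m)}=\{N:5+mP_{k-1}\#\le N\le 4+(m+1)P_{k-1}\#\}$ for $0\le m\le P_k-1$. A prospective prime in $S_k$ is an $N\in S_k$ coprime to $P_k\#$; prospective primes $a<b$ in $S_k$ are consecutive if no integer strictly between them is coprime to $P_k\#$; a consecutive prospective prime pair with gap $g$ is a pair $(a,a+g)$ of consecutive prospective primes. *)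

(* Defs.v *)
From mathcomp Require Import all_boot.
Set Implicit Arguments. Unset Strict Implicit. Unset Printing Implicit Defensive.

Lemma next_prime_ex n : exists p, (n < p) && prime p.
Proof. by case: (prime_above n) => p H1 H2; exists p; rewrite H1 H2. Qed.

Definition next_prime (n : nat) : nat := ex_minn (next_prime_ex n).

(* P k = k-th prime, P 1 = 2, P 2 = 3, ...; (P 0 = 1 is a dummy value) *)
Definition P (k : nat) : nat := iter k next_prime 1.

Definition primorial (k : nat) : nat := \prod_(1 <= i < k.+1) P i.

Definition inS (k N : nat) : bool := (5 <= N) && (N <= 4 + primorial k).

Definition prospective (k N : nat) : bool := inS k N && coprime N (primorial k).

Definition cons_pair (k a g : nat) : Prop :=
  0 < g /\ prospective k a /\ prospective k (a + g) /\
  (forall n, a < n < a + g -> ~~ coprime n (primorial k)).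

(* Main.v *)
Require Import Defs.
From mathcomp Require Import all_boot zify.

Lemma P_S k : P k.+1 = next_prime (P k).
Proof. by []. Qed.

Lemma next_prime_spec n : (n < next_prime n) && prime (next_prime n).
Proof. rewrite /next_prime; by case: ex_minnP. Qed.

Lemma P_prime k : 0 < k -> prime (P k).
Proof. case: k => // k _; rewrite P_S; by case/andP: (next_prime_spec (P k)). Qed.

Lemma P_lt i k : i < k -> P i < P k.
Proof.
apply: (homo_ltn (r := fun x y => x < y)); first by move=> ???; apply: ltn_trans.
by move=> n; rewrite P_S; case/andP: (next_prime_spec (P n)).
Qed.

Lemma coprime_prim k n : k < n -> coprime (P n) (primorial k).
Proof.
move=> kn; rewrite /primorial big_seq.
apply: (big_ind (fun x => coprime (P n) x)); first by rewrite coprimen1.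
  by move=> x y Hx Hy; rewrite coprimeMr Hx Hy.
move=> i Hi.
have i0 : 0 < i by move: Hi; rewrite mem_index_iota; case/andP.
rewrite prime_coprime ?P_prime //; last by apply: leq_ltn_trans kn.
rewrite dvdn_prime2 ?P_prime //; last by apply: leq_ltn_trans kn.
have : i < n by move: Hi; rewrite mem_index_iota => /andP [] _ H; apply: leq_ltn_trans kn.
by move=> /P_lt; rewrite ltn_neqAle eq_sym => /andP [] /negPf ->.
Qed.

Lemma count_atmost1 (Q : pred nat) s : uniq s ->
  (forall x y, x \in s -> y \in s -> Q x -> Q y -> x = y) -> count Q s <= 1.
Proof.
elim: s => //= x s IH /andP [] xs us H.
case Qx: (Q x) => /=.
  rewrite ltnS leqn0 eqn0Ngt -has_count; apply/hasP => [[y ys Qy]].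
  have E : x = y by apply: H => //; rewrite inE ?eqxx ?ys ?orbT.
  by subst; rewrite ys in xs.
apply: IH => // u v us' vs'; apply: H; by rewrite inE ?us' ?vs' orbT.
Qed.

Lemma count_dvd p q c D : prime p -> coprime p D -> q <= p ->
  count (predC (fun x => ~~ (p %| c + x * D))) (iota 0 q) <= 1.
Proof.
move=> pp cpD qp.
rewrite (eq_count (a2 := fun x => p %| c + x * D)); last by move=> x /=; rewrite negbK.
 apply: count_atmost1; first exact: iota_uniq.
have key : forall x y, x <= y -> y < q -> p %| c + x * D -> p %| c + y * D -> x = y.
  move=> x y xy yq Hx Hy.
  have : p %| (c + y * D) - (c + x * D) by apply: dvdn_sub.
  rewrite subnDl -mulnBl (Gauss_dvdl _ cpD).
  move=> Hd; have : y - x < p by apply: leq_ltn_trans (leq_subr _ _) (leq_trans yq qp).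
  have [H0|H0] := posnP (y - x).
    by move: H0 => /eqP; rewrite subn_eq0 => ? _; apply/eqP; rewrite eqn_leq xy.
  by rewrite ltnNge (dvdn_leq H0 Hd).
move=> x y; rewrite !mem_iota !add0n => /andP [] _ xq /andP [] _ yq Hx Hy.
case: (leqP x y) => xy; first by apply: key.
by apply/esym; apply: key => //; apply: ltnW.
Qed.

Lemma count_and4 (A B C D : pred nat) s :
  count (fun x => ~~ [&& A x, B x, C x & D x]) s <=
  count (predC A) s + count (predC B) s + count (predC C) s + count (predC D) s.
Proof.
elim: s => //= x s IH.
by case: (A x); case: (B x); case: (C x); case: (D x) => /=; lia.
Qed.

Theorem lemma5 (g : nat) (hg : 0 < g)
  (j : nat) (hl : exists l, (exists b, cons_pair l b g) /\ l + 2 < j)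
  (a : nat) (ha : cons_pair j a g) :
  forall m, m < P j.+2 ->
    P j.+1 - 4 <=
    count (fun mj =>
             let M := mj * primorial j + m * primorial j.+1 in
             coprime (a + M) (primorial j.+2) &&
             coprime (a + g + M) (primorial j.+2))
          (iota 0 (P j.+1)).
Proof.
move=> m _.
case: ha => _ [/andP [] _ ca [/andP [] _ cag] _].
set q := P j.+1; set r := P j.+2; set D := primorial j.
have pq : prime q by apply: P_prime.
have pr : prime r by apply: P_prime.
have qr : q <= r by apply: ltnW; apply: P_lt.
have cqD : coprime q D by apply: coprime_prim.
have crD : coprime r D by apply: coprime_prim; apply: ltnW.
have E1 : primorial j.+1 = D * q by rewrite /primorial big_nat_recr.
have E2 : primorial j.+2 = D * q * r by rewrite /primorial big_nat_recr //= -/(primorial j.+1) E1.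
have red : forall b mj, coprime b D ->
    coprime (b + (mj * D + m * primorial j.+1)) (primorial j.+2) =
    ~~ (q %| (b + m * primorial j.+1) + mj * D) && ~~ (r %| (b + m * primorial j.+1) + mj * D).
  move=> b mj cb.
  have -> : b + (mj * D + m * primorial j.+1) = (b + m * primorial j.+1) + mj * D by rewrite addnA addnAC.
  rewrite E2 !coprimeMr -!prime_coprime // ![coprime q _]coprime_sym ![coprime r _]coprime_sym.
  have -> : coprime (b + m * primorial j.+1 + mj * D) D => //.
  rewrite E1 (_ : b + m * (D * q) + mj * D = (m * q + mj) * D + b); last by nia.
  by rewrite /coprime gcdnC gcdnMDl gcdnC.
rewrite (eq_count (a2 := fun mj => [&& ~~ (q %| (a + m * primorial j.+1) + mj * D),
     ~~ (r %| (a + m * primorial j.+1) + mj * D), ~~ (q %| (a + g + m * primorial j.+1) + mj * D)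
     & ~~ (r %| (a + g + m * primorial j.+1) + mj * D)])); last first.
  by move=> mj /=; rewrite red // red // !andbA.
set good := (fun mj => _).
have := count_predC good (iota 0 q); rewrite size_iota => Hs.
have := count_and4 (fun mj => ~~ (q %| (a + m * primorial j.+1) + mj * D))
     (fun mj => ~~ (r %| (a + m * primorial j.+1) + mj * D))
     (fun mj => ~~ (q %| (a + g + m * primorial j.+1) + mj * D))
     (fun mj => ~~ (r %| (a + g + m * primorial j.+1) + mj * D)) (iota 0 q).
rewrite (eq_count (a2 := predC good)) // => Hb.
have H1 := count_dvd _ _ (a + m * primorial j.+1) _ pq cqD (leqnn q).
have H2 := count_dvd _ _ (a + m * primorial j.+1) _ pr crD qr.
have H3 := count_dvd _ _ (a + g + m * primorial j.+1) _ pq cqD (leqnn q).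
have H4 := count_dvd _ _ (a + g + m * primorial j.+1) _ pr crD qr.
lia.
Qed.
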